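(* Let $N\ge3$, $\lambda\in\mathbb R$, and let $\mathbf P$, $V$ be as defined below. For each bijection $\sigma$ of the set of leg labels $\{b,c,d\}$ onto itself, define the elementary melon amplitude $$A^{\sigma}_{x,y}=\frac{\lambda^2}{N^3}\sum \mathbf P_{x,a}\,\mathbf P_{y,a'}\,V_{a,b,c,d}\,V_{a',b',c',d'}\,\mathbf P_{b,\sigma(b)'}\,\mathbf P_{c,\sigma(c)'}\,\mathbf P_{d,\sigma(d)'},$$ summing over all multi-indices $a,b,c,d,a',b',c',d'\in\{1,\dots,N\}^3$ (here $\sigma(b)'$ denotes the primed multi-index with label $\sigma(b)$). Then: (i) if $\sigma$ is the identity or the transposition exchanging $b$ and $d$, $A^\sigma=\lambda^2\frac{8N^6-24N^5-23N^4+58N^3+120N^2-88N-132}{216(N-1)^3N^3}\,\mathbf P$; (ii) for each of the four other bijections, $A^\sigma=\lambda^2\frac{N^6-3N^5+5N^4-58N^3+105N^2+277N-246}{432N^3(N-1)^3}\,\mathbf P$; (iii) consequently $\sum_{\sigma}A^\sigma=\lambda^2 f_M(N)\,\mathbf P$ with $f_M(N)=\frac{N^5-2N^4-4N^3-4N^2+21N+42}{12N^3(N-1)^2}$, and $f_M(N)\to\frac1{12}$ as $N\to\infty$.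
   Context: Multi-indices range over $\{1,\dots,N\}^3$. $\mathbf P$ is the symmetric kernel $\mathbf P_{a,b}=\tfrac13(\delta_{a_1b_1}\delta_{a_2b_2}\delta_{a_3b_3}-\delta_{a_1b_3}\delta_{a_2b_2}\delta_{a_3b_1})+\tfrac16(\delta_{a_1b_2}\delta_{a_2b_1}\delta_{a_3b_3}+\delta_{a_1b_1}\delta_{a_2b_3}\delta_{a_3b_2})-\tfrac16(\delta_{a_1b_2}\delta_{a_2b_3}\delta_{a_3b_1}+\delta_{a_1b_3}\delta_{a_2b_1}\delta_{a_3b_2})+\tfrac1{2(N-1)}(\delta_{a_1b_3}\delta_{a_2a_3}\delta_{b_1b_2}+\delta_{a_1a_2}\delta_{a_3b_1}\delta_{b_2b_3})-\tfrac1{2(N-1)}(\delta_{a_1b_1}\delta_{a_2a_3}\delta_{b_2b_3}+\delta_{a_1a_2}\delta_{a_3b_3}\delta_{b_1b_2})$ (orthogonal projector onto traceless tensors with mixed symmetry of Young tableau with rows $\{1,2\},\{3\}$). The vertex kernel is $V_{a,b,c,d}=\delta_{a_3b_1}\delta_{b_3c_1}\delta_{c_3d_1}\delta_{d_3a_1}\delta_{a_2c_2}\delta_{b_2d_2}$ with legs in cyclic order $a,b,c,d$. The six amplitudes $A^\sigma$ are the six elementary melon two-point maps (two vertices, external legs on different vertices, the remaining three legs of one vertex paired with the remaining three of the other) arising at order $\lambda^2$ in the two-point function of the model with interaction $\frac{\lambda}{4N^{3/2}}\sum V_{a,b,c,d}T_aT_bT_cT_d$ and covariance $\mathbf P$.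 *)

(* Defs.v *)
From HB Require Import structures.
From mathcomp Require Import all_boot all_order all_algebra all_fingroup.
Set Implicit Arguments. Unset Strict Implicit. Unset Printing Implicit Defensive.
Import Order.TTheory GRing.Theory Num.Theory.
Local Open Scope ring_scope.

(* Multi-indices in {1..N}^3, represented with components in 'I_N
   (i.e. {0..N-1}); a = ((a_1, a_2), a_3). *)
Notation midx N := (('I_N * 'I_N) * 'I_N)%type.

Definition c1 {N} (a : midx N) : 'I_N := a.1.1.
Definition c2 {N} (a : midx N) : 'I_N := a.1.2.
Definition c3 {N} (a : midx N) : 'I_N := a.2.

Definition dlt {R : ringType} {N} (i j : 'I_N) : R := (i == j)%:R.

Definition Pker (R : fieldType) (N : nat) (a b : midx N) : R :=
  let d := @dlt R N in
  3^-1 * (d (c1 a) (c1 b) * d (c2 a) (c2 b) * d (c3 a) (c3 b)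
          - d (c1 a) (c3 b) * d (c2 a) (c2 b) * d (c3 a) (c1 b))
  + 6^-1 * (d (c1 a) (c2 b) * d (c2 a) (c1 b) * d (c3 a) (c3 b)
            + d (c1 a) (c1 b) * d (c2 a) (c3 b) * d (c3 a) (c2 b))
  - 6^-1 * (d (c1 a) (c2 b) * d (c2 a) (c3 b) * d (c3 a) (c1 b)
            + d (c1 a) (c3 b) * d (c2 a) (c1 b) * d (c3 a) (c2 b))
  + (2 * (N%:R - 1))^-1 * (d (c1 a) (c3 b) * d (c2 a) (c3 a) * d (c1 b) (c2 b)
                          + d (c1 a) (c2 a) * d (c3 a) (c1 b) * d (c2 b) (c3 b))
  - (2 * (N%:R - 1))^-1 * (d (c1 a) (c1 b) * d (c2 a) (c3 a) * d (c2 b) (c3 b)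
                          + d (c1 a) (c2 a) * d (c3 a) (c3 b) * d (c1 b) (c2 b)).

Definition Vker (R : ringType) (N : nat) (a b c d : midx N) : R :=
  let e := @dlt R N in
  e (c3 a) (c1 b) * e (c3 b) (c1 c) * e (c3 c) (c1 d) * e (c3 d) (c1 a)
  * e (c2 a) (c2 c) * e (c2 b) (c2 d).

Definition legB : 'I_3 := @Ordinal 3 0 isT.
Definition legC : 'I_3 := @Ordinal 3 1 isT.
Definition legD : 'I_3 := @Ordinal 3 2 isT.

Definition leg {N} (b c d : midx N) (l : 'I_3) : midx N :=
  if val l == 0%N then b else if val l == 1%N then c else d.

Definition melonA (R : fieldType) (N : nat) (lam : R) (s : 'S_3)
    (x y : midx N) : R :=
  lam ^+ 2 / (N%:R ^+ 3) *
  \sum_(a : midx N) \sum_(b : midx N) \sum_(c : midx N) \sum_(d : midx N)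
  \sum_(a' : midx N) \sum_(b' : midx N) \sum_(c' : midx N) \sum_(d' : midx N)
    (Pker R x a * Pker R y a' * Vker R a b c d * Vker R a' b' c' d'
     * Pker R b (leg b' c' d' (s legB))
     * Pker R c (leg b' c' d' (s legC))
     * Pker R d (leg b' c' d' (s legD))).

Definition coefI (R : fieldType) (N : nat) : R :=
  let n : R := N%:R in
  (8 * n ^+ 6 - 24 * n ^+ 5 - 23 * n ^+ 4 + 58 * n ^+ 3 + 120 * n ^+ 2 - 88 * n - 132)
  / (216 * (n - 1) ^+ 3 * n ^+ 3).

Definition coefII (R : fieldType) (N : nat) : R :=
  let n : R := N%:R in
  (n ^+ 6 - 3 * n ^+ 5 + 5 * n ^+ 4 - 58 * n ^+ 3 + 105 * n ^+ 2 + 277 * n - 246)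
  / (432 * n ^+ 3 * (n - 1) ^+ 3).

Definition fM (R : fieldType) (N : nat) : R :=
  let n : R := N%:R in
  (n ^+ 5 - 2 * n ^+ 4 - 4 * n ^+ 3 - 4 * n ^+ 2 + 21 * n + 42)
  / (12 * n ^+ 3 * (n - 1) ^+ 2).

(* Main.v *)
Require Import Defs.
From HB Require Import structures.
From mathcomp Require Import all_boot all_order all_algebra all_fingroup.
From Stdlib Require ZArith.
From mathcomp Require Import ssrZ.
From mathcomp Require Import ring lra zify.
Import Order.TTheory GRing.Theory Num.Theory.
Import ssrZ.Instances.
Set Implicit Arguments. Unset Strict Implicit. Unset Printing Implicit Defensive.
Local Open Scope ring_scope.
Notation Z := BinNums.Z.

Local Close Scope ring_scope.
Definition cpoly := seq Z.
Fixpoint cadd (p q : cpoly) : cpoly :=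
  match p, q with [::], _ => q | _, [::] => p | a::p', b::q' => BinInt.Z.add a b :: cadd p' q' end.
Definition cscale (a : Z) (p : cpoly) := map (BinInt.Z.mul a) p.
Fixpoint cmul (p q : cpoly) : cpoly :=
  match p with [::] => [::] | a::p' => cadd (cscale a q) (BinNums.Z0 :: cmul p' q) end.
Definition edge := (nat * nat)%type.
Definition mon := (cpoly * seq edge)%type.
Definition pmul (p q : seq mon) : seq mon :=
  [seq (cmul m1.1 m2.1, m1.2 ++ m2.2) | m1 <- p, m2 <- q].
Fixpoint partner (v : nat) (es : seq edge) : option nat :=
  match es with [::] => None
  | e :: es' => if (e.1 == v) && (e.2 != v) then Some e.2
                else if (e.2 == v) && (e.1 != v) then Some e.1 else partner v es' end.
Definition sbs (v u w : nat) := if w == v then u else w.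
Definition elim1 (v : nat) (m : mon) : mon :=
  match partner v m.2 with
  | Some u => (m.1, [seq (sbs v u e.1, sbs v u e.2) | e <- m.2])
  | None => (BinNums.Z0 :: m.1, m.2) end.
Definition elimall (vs : seq nat) (p : seq mon) := foldr (fun v p => map (elim1 v) p) p vs.
Definition orient (e : edge) : edge := if (e.1 <= e.2)%N then e else (e.2, e.1).
Definition lexle (e f : edge) := (e.1 < f.1)%N || ((e.1 == f.1) && (e.2 <= f.2)%N).
Definition norm_e (es : seq edge) := sort lexle (undup [seq orient e | e <- es & e.1 != e.2]).
Fixpoint seqle (s t : seq edge) : bool :=
  match s, t with [::], _ => true | _ :: _, [::] => false
  | e :: s', f :: t' => if e == f then seqle s' t' else lexle e f end.
Fixpoint comb_aux (acc : mon) (p : seq mon) : seq mon :=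
  match p with [::] => [:: acc]
  | m :: p' => if acc.2 == m.2 then comb_aux (cadd acc.1 m.1, acc.2) p' else acc :: comb_aux m p' end.
Definition comb (p : seq mon) := match p with [::] => [::] | m :: p' => comb_aux m p' end.
Definition czero (c : cpoly) := all (fun a => BinInt.Z.eqb a BinNums.Z0) c.
Definition merge (p : seq mon) :=
  [seq m <- comb (sort (fun m m' => seqle m.2 m'.2) p) | ~~ czero m.1].
Definition vars3 (bs : seq nat) := flatten [seq [:: b; b.+1; b.+2] | b <- bs].
Definition normp (p : seq mon) := merge [seq (m.1, norm_e m.2) | m <- p].
Definition stage (q : seq mon) (bs : seq nat) (p : seq mon) :=
  normp (elimall (vars3 bs) (pmul q p)).

Module C.
Import ZArith.
Definition Psyn (i j : nat) : seq mon :=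
  let a1 := i in let a2 := i.+1 in let a3 := i.+2 in
  let b1 := j in let b2 := j.+1 in let b3 := j.+2 in
  [:: ([:: (-4)%Z; 4%Z], [:: (a1,b1); (a2,b2); (a3,b3)]);
      ([:: 4%Z; (-4)%Z], [:: (a1,b3); (a2,b2); (a3,b1)]);
      ([:: (-2)%Z; 2%Z], [:: (a1,b2); (a2,b1); (a3,b3)]);
      ([:: (-2)%Z; 2%Z], [:: (a1,b1); (a2,b3); (a3,b2)]);
      ([:: 2%Z; (-2)%Z], [:: (a1,b2); (a2,b3); (a3,b1)]);
      ([:: 2%Z; (-2)%Z], [:: (a1,b3); (a2,b1); (a3,b2)]);
      ([:: 6%Z], [:: (a1,b3); (a2,a3); (b1,b2)]);
      ([:: 6%Z], [:: (a1,a2); (a3,b1); (b2,b3)]);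
      ([:: (-6)%Z], [:: (a1,b1); (a2,a3); (b2,b3)]);
      ([:: (-6)%Z], [:: (a1,a2); (a3,b3); (b1,b2)])].
Definition Vsyn (a b c d : nat) : seq mon :=
  [:: ([:: 1%Z], [:: (a.+2, b); (b.+2, c); (c.+2, d); (d.+2, a); (a.+1, c.+1); (b.+1, d.+1)])].
Definition one : seq mon := [:: ([:: 1%Z], [::])].
Definition numI : cpoly := [:: (-132)%Z; (-88)%Z; 120%Z; 58%Z; (-23)%Z; (-24)%Z; 8%Z].
Definition numII : cpoly := [:: (-246)%Z; 277%Z; 105%Z; (-58)%Z; 5%Z; (-3)%Z; 1%Z].
Definition cI := cmul numI [:: (-96)%Z; 96%Z].
Definition cII := cmul numII [:: (-48)%Z; 48%Z].
End C.
Import C.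

Definition Qsyn (p q r : nat) :=
  pmul (Vsyn 18 21 24 27) (pmul (Psyn 9 (21 + 3 * p)%N)
       (pmul (Psyn 12 (21 + 3 * q)%N) (Psyn 15 (21 + 3 * r)%N))).
Definition K4 (p q r : nat) :=
  let K1 := stage (Qsyn p q r) [:: 21; 24; 27] one in
  let K2 := stage (Psyn 3 18) [:: 18] K1 in
  let K3 := stage (Vsyn 6 9 12 15) [:: 9; 12; 15] K2 in
  stage (Psyn 0 6) [:: 6] K3.
Definition target (c : cpoly) := normp [seq (cmul c m.1, m.2) | m <- Psyn 0 3].
Local Open Scope ring_scope.

Lemma K4_012 : K4 0 1 2 = target cI. Proof. by vm_compute. Qed.
Lemma K4_210 : K4 2 1 0 = target cI. Proof. by vm_compute. Qed.
Lemma K4_021 : K4 0 2 1 = target cII. Proof. by vm_compute. Qed.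
Lemma K4_102 : K4 1 0 2 = target cII. Proof. by vm_compute. Qed.
Lemma K4_120 : K4 1 2 0 = target cII. Proof. by vm_compute. Qed.
Lemma K4_201 : K4 2 0 1 = target cII. Proof. by vm_compute. Qed.

Definition zR (R : ringType) (z : BinNums.Z) : R := (int_of_Z z)%:~R.
Lemma zRD (R : ringType) a b : zR R (BinInt.Z.add a b) = zR R a + zR R b.
Proof. by rewrite /zR (rmorphD int_of_Z a b) intrD. Qed.
Lemma zRM (R : ringType) a b : zR R (BinInt.Z.mul a b) = zR R a * zR R b.
Proof. by rewrite /zR (rmorphM int_of_Z a b) intrM. Qed.
Lemma zR0 (R : ringType) : zR R BinNums.Z0 = 0.
Proof. by []. Qed.

Definition ceval (R : ringType) (n : R) (p : cpoly) : R :=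
  foldr (fun a acc => zR R a + n * acc) 0 p.
Lemma ceval_cadd (R : comRingType) (n : R) p q :
  ceval n (cadd p q) = ceval n p + ceval n q.
Proof.
elim: p q => [|a p IH] [|b q] /=; rewrite ?add0r ?addr0 //.
by rewrite IH zRD mulrDr; ring.
Qed.
Lemma ceval_cscale (R : comRingType) (n : R) a p :
  ceval n (cscale a p) = zR R a * ceval n p.
Proof.
elim: p => [|b p IH] /=; first by rewrite mulr0.
by rewrite IH zRM; ring.
Qed.
Lemma ceval_cmul (R : comRingType) (n : R) p q :
  ceval n (cmul p q) = ceval n p * ceval n q.
Proof.
elim: p => [|a p IH] /=; first by rewrite mul0r.
by rewrite ceval_cadd ceval_cscale /= zR0 IH; ring.
Qed.
Lemma ceval_czero (R : comRingType) (n : R) p : czero p -> ceval n p = 0.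
Proof.
elim: p => [|a p IH] //= /andP[/BinInt.Z.eqb_eq -> /IH ->].
by rewrite zR0 mulr0 addr0.
Qed.

Definition upd N (rho : nat -> 'I_N) (v : nat) (j : 'I_N) : nat -> 'I_N :=
  fun w => if w == v then j else rho w.
Definition den_e N (es : seq edge) (rho : nat -> 'I_N) : bool :=
  all (fun e => rho e.1 == rho e.2) es.
Definition den_m (R : comRingType) N (m : mon) (rho : nat -> 'I_N) : R :=
  ceval (N%:R : R) m.1 * (den_e m.2 rho)%:R.
Definition den (R : comRingType) N (p : seq mon) (rho : nat -> 'I_N) : R :=
  \sum_(m <- p) den_m R m rho.

Lemma den_cat (R : comRingType) N p q (rho : nat -> 'I_N) :
  den R (p ++ q) rho = den R p rho + den R q rho.
Proof. by rewrite /den big_cat. Qed.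

Lemma den_pmul (R : comRingType) N p q (rho : nat -> 'I_N) :
  den R (pmul p q) rho = den R p rho * den R q rho.
Proof.
rewrite /den /pmul big_allpairs_dep big_distrl /=; apply: eq_bigr => m1 _.
rewrite big_distrr /=; apply: eq_bigr => m2 _.
rewrite /den_m /den_e /= all_cat ceval_cmul -mulnb natrM; ring.
Qed.
Lemma partner_none v es : partner v es = None ->
  forall e, e \in es -> (e.1 == v) = (e.2 == v).
Proof.
elim: es => [|f es IH] //=.
case: ifP => // /negbT H1; case: ifP => // /negbT H2 /IH Hes e.
rewrite inE => /orP[/eqP ->|/Hes //].
move: H1 H2; rewrite !negb_and !negbK.
by case: (f.1 == v); case: (f.2 == v).
Qed.

Lemma partner_some v es u : partner v es = Some u ->
  u != v /\ exists2 e, e \in es & ((e.1 == v) && (e.2 == u)) || ((e.2 == v) && (e.1 == u)).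
Proof.
elim: es => [|f es IH] //=.
case: ifP => [/andP[H1 H2] [<-]|_].
  by split => //; exists f; rewrite ?mem_head // H1 eqxx.
case: ifP => [/andP[H1 H2] [<-]|_].
  by split => //; exists f; rewrite ?mem_head // H1 eqxx orbT.
by move/IH => [Hu [e He He2]]; split => //; exists e => //; rewrite inE He orbT.
Qed.

Lemma elim1_ok (R : comRingType) N (m : mon) v (rho : nat -> 'I_N) :
  \sum_(j : 'I_N) den_m R m (upd rho v j) = den_m R (elim1 v m) rho.
Proof.
rewrite /elim1; case: m => c es /=.
case Hp: (partner v es) => [u|].
- have [Huv [e He Hev]] := partner_some Hp.
  have key : forall j, den_e es (upd rho v j) = (j == rho u) && den_e es (upd rho v j).
    move=> j; case Hd: (den_e es (upd rho v j)); rewrite ?andbF ?andbT //.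
    move: Hd => /allP /(_ e He) /=; rewrite /upd.
    case: e He Hev => e1 e2 /= _.
    case/orP => /andP[/eqP E1 /eqP E2]; subst e1 e2; rewrite eqxx (negbTE Huv).
      by move=> ->.
    by rewrite eq_sym => ->.
  rewrite /den_m /=.
  rewrite (bigD1 (rho u)) //= big1 ?addr0; last first.
    by move=> j Hj; rewrite key (negbTE Hj) /= mulr0.
  congr (_ * (_ : bool)%:R).
  rewrite /den_e all_map; apply: eq_all => f /=.
  by rewrite /upd /sbs; case: (f.1 == v); case: (f.2 == v).
- have Hn := partner_none Hp.
  have key : forall j, den_e es (upd rho v j) = den_e es rho.
    move=> j; rewrite /den_e; apply: eq_in_all => f /Hn /=; rewrite /upd.
    case E1: (f.1 == v); case E2: (f.2 == v) => //= _.
    by rewrite (eqP E1) (eqP E2) !eqxx.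
  rewrite /den_m /=.
  under eq_bigr do rewrite key.
  rewrite sumr_const card_ord zR0 add0r -mulr_natl; ring.
Qed.

Fixpoint Ssum (R : comRingType) N (vs : seq nat) (F : (nat -> 'I_N) -> R) (rho : nat -> 'I_N) : R :=
  match vs with
  | [::] => F rho
  | v :: vs' => \sum_(j : 'I_N) Ssum vs' F (upd rho v j)
  end.

Lemma Ssum_ext (R : comRingType) N vs (F G : (nat -> 'I_N) -> R) rho :
  (forall r, F r = G r) -> Ssum vs F rho = Ssum vs G rho.
Proof.
move=> FG; elim: vs rho => [|v vs IH] rho /=; first exact: FG.
by apply: eq_bigr => j _; apply: IH.
Qed.

Lemma elimall_ok (R : comRingType) N vs p (rho : nat -> 'I_N) :
  Ssum vs (den R p) rho = den R (elimall vs p) rho.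
Proof.
elim: vs rho => [|v vs IH] rho //=.
under eq_bigr do rewrite IH.
rewrite /den exchange_big /= big_map; apply: eq_bigr => m _.
exact: elim1_ok.
Qed.
Lemma den_e_norm N es (rho : nat -> 'I_N) : den_e (norm_e es) rho = den_e es rho.
Proof.
rewrite /den_e /norm_e all_sort all_undup all_map all_filter; apply: eq_all => -[a b] /=.
rewrite /orient /=; case: (a <= b)%N => /=; case: eqP => [->|] //=; rewrite ?eqxx // eq_sym.
Qed.

Lemma den_m_cadd (R : comRingType) N c1 c2 es (rho : nat -> 'I_N) :
  den_m R (cadd c1 c2, es) rho = den_m R (c1, es) rho + den_m R (c2, es) rho.
Proof. by rewrite /den_m /= ceval_cadd mulrDl. Qed.

Lemma den_cons (R : comRingType) N m p (rho : nat -> 'I_N) :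
  den R (m :: p) rho = den_m R m rho + den R p rho.
Proof. by rewrite /den big_cons. Qed.

Lemma den_comb_aux (R : comRingType) N acc p (rho : nat -> 'I_N) :
  den R (comb_aux acc p) rho = den_m R acc rho + den R p rho.
Proof.
elim: p acc => [|m p IH] acc.
  by rewrite /= /den big_seq1 big_nil addr0.
have -> : comb_aux acc (m :: p) = if acc.2 == m.2 then comb_aux (cadd acc.1 m.1, acc.2) p
   else acc :: comb_aux m p by [].
case: ifP => [/eqP E|_].
  transitivity (den_m R (cadd acc.1 m.1, acc.2) rho + den R p rho); first exact: IH.
  rewrite den_cons addrA; congr (_ + _).
  case: acc E => c1 es /= ->; case: m => c2 es2 /=.
  exact: den_m_cadd.
rewrite !den_cons; congr (_ + _); exact: IH.
Qed.

Lemma den_merge (R : comRingType) N p (rho : nat -> 'I_N) :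
  den R (merge p) rho = den R p rho.
Proof.
have Hs : den R (sort (fun m m' => seqle m.2 m'.2) p) rho = den R p rho.
  by rewrite /den (perm_big _ (permEl (perm_sort _ p))).
rewrite -Hs /merge.
have -> : den R [seq m <- comb (sort (fun m m' => seqle m.2 m'.2) p) | ~~ czero m.1] rho
   = den R (comb (sort (fun m m' => seqle m.2 m'.2) p)) rho.
  rewrite /den big_filter big_mkcond /=.
  apply: eq_bigr => m _; case: ifP => // /negbFE /(ceval_czero (N%:R : R)).
  by rewrite /den_m => ->; rewrite mul0r.
case: (sort _ p) => [|m s] //.
by rewrite /comb den_comb_aux den_cons.
Qed.

Lemma den_normp (R : comRingType) N p (rho : nat -> 'I_N) :
  den R (normp p) rho = den R p rho.
Proof.
rewrite /normp den_merge /den big_map; apply: eq_bigr => m _.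
by rewrite /den_m /= den_e_norm.
Qed.

Lemma stage_ok (R : comRingType) N q bs p (rho : nat -> 'I_N) :
  Ssum (vars3 bs) (fun r => den R q r * den R p r) rho = den R (stage q bs p) rho.
Proof.
rewrite /stage den_normp -elimall_ok; apply: Ssum_ext => r.
by rewrite den_pmul.
Qed.

Definition upd3 N (rho : nat -> 'I_N) (b : nat) (a : midx N) :=
  upd (upd (upd rho b a.1.1) b.+1 a.1.2) b.+2 a.2.

Fixpoint SM (R : comRingType) N (bs : seq nat) (F : (nat -> 'I_N) -> R) (rho : nat -> 'I_N) : R :=
  match bs with
  | [::] => F rho
  | b :: bs' => \sum_(a : midx N) SM bs' F (upd3 rho b a)
  end.

Lemma sum_pair (R : comRingType) (I J : finType) (G : I * J -> R) :
  \sum_(a : I * J) G a = \sum_(i : I) \sum_(j : J) G (i, j).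
Proof.
rewrite (pair_bigA _ (fun i j => G (i, j))); apply: eq_bigr => -[i j] _ //.
Qed.

Lemma sum_midx (R : comRingType) N (G : midx N -> R) :
  \sum_(a : midx N) G a = \sum_(i : 'I_N) \sum_(j : 'I_N) \sum_(k : 'I_N) G ((i, j), k).
Proof.
rewrite sum_pair sum_pair; apply: eq_bigr => i _; apply: eq_bigr => j _ //.
Qed.

Lemma SM_Ssum (R : comRingType) N bs (F : (nat -> 'I_N) -> R) (rho : nat -> 'I_N) :
  SM bs F rho = Ssum (vars3 bs) F rho.
Proof.
elim: bs rho => [|b bs IH] rho //=.
rewrite sum_midx; apply: eq_bigr => i _; apply: eq_bigr => j _; apply: eq_bigr => k _.
by rewrite IH.
Qed.

Lemma SM_ext (R : comRingType) N bs (F G : (nat -> 'I_N) -> R) rho :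
  (forall r, F r = G r) -> SM bs F rho = SM bs G rho.
Proof. by move=> FG; rewrite !SM_Ssum; apply: Ssum_ext. Qed.

Lemma SM_stage (R : comRingType) N q bs p (rho : nat -> 'I_N) :
  SM bs (fun r => den R q r * den R p r) rho = den R (stage q bs p) rho.
Proof. by rewrite SM_Ssum stage_ok. Qed.

Definition F4 (R : comRingType) N (p q r : nat) (rho : nat -> 'I_N) : R :=
  SM [:: 6%N] (fun r1 => den R (Psyn 0%N 6%N) r1 *
   SM [:: 9%N; 12%N; 15%N] (fun r2 => den R (Vsyn 6%N 9%N 12%N 15%N) r2 *
    SM [:: 18%N] (fun r3 => den R (Psyn 3%N 18%N) r3 *
     SM [:: 21%N; 24%N; 27%N] (fun r4 => den R (Qsyn p q r) r4 * den R one r4) r3) r2) r1) rho.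

Lemma F4_K4 (R : comRingType) N p q r (rho : nat -> 'I_N) :
  F4 R p q r rho = den R (K4 p q r) rho.
Proof.
rewrite /F4 /K4 -SM_stage; apply: SM_ext => r1; congr (_ * _).
rewrite -SM_stage; apply: SM_ext => r2; congr (_ * _).
rewrite -SM_stage; apply: SM_ext => r3; congr (_ * _).
by rewrite SM_stage.
Qed.

Fixpoint pnat (p : BinNums.positive) : nat :=
  match p with BinNums.xH => 1 | BinNums.xO q => Nat.add (pnat q) (pnat q) | BinNums.xI q => S (Nat.add (pnat q) (pnat q)) end.
Lemma pnatE p : pnat p = BinPos.Pos.to_nat p.
Proof.
elim: p => [q IH|q IH|] /=.
- by rewrite Pnat.Pos2Nat.inj_xI IH; lia.
- by rewrite Pnat.Pos2Nat.inj_xO IH; lia.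
- by rewrite Pnat.Pos2Nat.inj_1.
Qed.
Lemma zRpos (R : ringType) p : zR R (BinNums.Zpos p) = (pnat p)%:R.
Proof. by rewrite pnatE. Qed.
Lemma zRneg (R : ringType) p : zR R (BinNums.Zneg p) = - (pnat p)%:R.
Proof.
rewrite pnatE /zR /=; have := Pnat.Pos2Nat.is_pos p.
case: (BinPos.Pos.to_nat p) => [H|n _] /=; first by inversion H.
by rewrite NegzE mulrNz.
Qed.
Arguments zR : simpl never.
Lemma natr_and (R : ringType) (a b : bool) : ((a && b)%:R : R) = a%:R * b%:R.
Proof. by case: a; case: b; rewrite /= ?mulr1 ?mul1r ?mulr0 ?mul0r. Qed.

Definition mk N (rho : nat -> 'I_N) (i : nat) : midx N := ((rho i, rho i.+1), rho i.+2).

Lemma den_Psyn (R : numFieldType) N (rho : nat -> 'I_N) i j :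
  (N%:R : R) - 1 != 0 ->
  den R (Psyn i j) rho = (12 * ((N%:R : R) - 1)) * Pker R (mk rho i) (mk rho j).
Proof.
move=> hN.
rewrite /den /Psyn !big_cons big_nil /den_m /den_e /= !andbT !natr_and.
rewrite !zRpos !zRneg /Pker /dlt /c1 /c2 /c3 /=.
field; by rewrite hN.
Qed.

Lemma den_Vsyn (R : comRingType) N (rho : nat -> 'I_N) a b c d :
  den R (Vsyn a b c d) rho = Vker R (mk rho a) (mk rho b) (mk rho c) (mk rho d).
Proof.
rewrite /den /Vsyn big_cons big_nil /den_m /den_e /= !andbT !natr_and zRpos /=.
rewrite /Vker /dlt /c1 /c2 /c3 /=; ring.
Qed.

Lemma den_one (R : comRingType) N (rho : nat -> 'I_N) : den R one rho = 1.
Proof. by rewrite /den /one big_cons big_nil /den_m /= zRpos /= addr0 mulr1 mulr0 addr0. Qed.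

Lemma mk_leg N (rho : nat -> 'I_N) (l : 'I_3) :
  mk rho (21 + 3 * l)%N = leg (mk rho 21) (mk rho 24) (mk rho 27) l.
Proof. by case: l => [[|[|[|k]]] Hk]. Qed.

Lemma den_Psyn_leg (R : numFieldType) N (rho : nat -> 'I_N) i (l : 'I_3) :
  (N%:R : R) - 1 != 0 ->
  den R (Psyn i (21 + 3 * l)%N) rho =
  (12 * ((N%:R : R) - 1)) * Pker R (mk rho i) (leg (mk rho 21) (mk rho 24) (mk rho 27) l).
Proof. by move=> hN; rewrite den_Psyn // mk_leg. Qed.

Definition rho0 N (x y : midx N) : nat -> 'I_N :=
  fun w => nth x.1.1 [:: x.1.1; x.1.2; x.2; y.1.1; y.1.2; y.2] w.

Arguments den : simpl never.
Arguments mk : simpl never.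
Arguments upd3 : simpl never.
Arguments Pker : simpl never.
Arguments Vker : simpl never.
Arguments leg : simpl never.

Lemma melon_F4 (R : numFieldType) N (lam : R) (s : 'S_3) (x y : midx N) :
  (N%:R : R) - 1 != 0 ->
  melonA lam s x y = lam ^+ 2 / N%:R ^+ 3 *
    ((12 * ((N%:R : R) - 1))^-5 * F4 R (s legB) (s legC) (s legD) (rho0 x y)).
Proof.
move=> hN.
rewrite /melonA /F4; congr (_ * _).
case: x => [[x1 x2] x3]; case: y => [[y1 y2] y3].
move: (s legB) (s legC) (s legD) => l1 l2 l3.
rewrite /=.
rewrite [in RHS]mulr_sumr; apply: eq_bigr => -[[a1 a2] a3] _; rewrite [in RHS]mulrA.
rewrite [in RHS]mulr_sumr; apply: eq_bigr => -[[b1 b2] b3] _.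
rewrite [in RHS]mulr_sumr; apply: eq_bigr => -[[c1 c2] c3] _.
rewrite [in RHS]mulr_sumr; apply: eq_bigr => -[[d1 d2] d3] _; rewrite [in RHS]mulrA.
rewrite [in RHS]mulr_sumr; apply: eq_bigr => -[[e1 e2] e3] _; rewrite [in RHS]mulrA.
rewrite [in RHS]mulr_sumr; apply: eq_bigr => -[[f1 f2] f3] _.
rewrite [in RHS]mulr_sumr; apply: eq_bigr => -[[g1 g2] g3] _.
rewrite [in RHS]mulr_sumr; apply: eq_bigr => -[[h1 h2] h3] _.
rewrite /Qsyn.
rewrite (den_pmul _ (Vsyn _ _ _ _)) (den_pmul _ (Psyn 9 _)) (den_pmul _ (Psyn 12 _)).
rewrite (den_Psyn _ 0 6 hN) (den_Psyn _ 3 18 hN) (den_Psyn_leg _ 9 l1 hN) (den_Psyn_leg _ 12 l2 hN) (den_Psyn_leg _ 15 l3 hN).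
rewrite (den_Vsyn _ _ 6%N 9%N 12%N 15%N).
rewrite (den_Vsyn _ _ 18%N 21%N 24%N 27%N).
rewrite den_one.
rewrite /mk /upd3 /upd /rho0 /Vker /=.
field; by rewrite hN.
Qed.

Lemma fM_diff (R : numFieldType) (n : R) : n != 0 -> n - 1 != 0 ->
  (n ^+ 5 - 2 * n ^+ 4 - 4 * n ^+ 3 - 4 * n ^+ 2 + 21 * n + 42) /
  (12 * n ^+ 3 * (n - 1) ^+ 2) - 12^-1 =
  - ((5 * n ^+ 3 + 4 * n ^+ 2 - 21 * n - 42) / (12 * n ^+ 3 * (n - 1) ^+ 2)).
Proof. move=> h0 h1; field; by rewrite h0 h1. Qed.

Lemma fM_lim (R : archiRealFieldType) :
  forall eps : R, 0 < eps ->
  exists M : nat, forall N : nat, (M <= N)%N -> `|fM R N - 12^-1| < eps.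
Proof.
move=> eps he.
exists (Num.bound (6 / eps)).+3 => N hMN.
have h60 : (0:R) < 6 by lra.
have hb := archi_boundP (ltW (divr_gt0 h60 he)).
have hN3 : (3 <= N)%N by apply: leq_trans hMN; rewrite !ltnS.
set n : R := N%:R.
have hn3 : 3 <= n by rewrite /n (ler_nat R 3 N).
have hk : (Num.bound (6 / eps))%:R + 3 <= n.
  by rewrite /n -(natrD R _ 3) ler_nat addnC.
have h6 : 6 / eps < n - 1.
  have : 0 <= ((Num.bound (6 / eps))%:R : R) by [].
  lra.
have h6' : 6 < (n - 1) * eps by rewrite -ltr_pdivrMr.
have hn0 : n != 0 by apply/eqP => h; lra.
have hn1 : n - 1 != 0 by apply/eqP => h; lra.
have -> : fM R N - 12^-1 = - ((5 * n^+3 + 4 * n^+2 - 21 * n - 42) / (12 * n^+3 * (n - 1)^+2)).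
  rewrite /fM /= -/n; exact: fM_diff.
have hd : 0 < 12 * n^+3 * (n - 1)^+2.
  apply: mulr_gt0; first by apply: mulr_gt0 => //; apply: exprn_gt0; lra.
  by apply: exprn_gt0; lra.
rewrite normrN ger0_norm; last first.
  apply: divr_ge0; last exact: ltW.
  have : 0 <= n by lra.
  move=> h0; have := exprn_ge0 3 h0; have := exprn_ge0 2 h0; nra.
rewrite ltr_pdivrMr //.
have h12 : 0 < 12 * n^+3 * (n - 1).
  apply: mulr_gt0; last lra; apply: mulr_gt0 => //; apply: exprn_gt0; lra.
have := ltr_pM2l h12 6 ((n - 1) * eps); rewrite h6' => /esym hh.
suff : 5 * n^+3 + 4 * n^+2 - 21 * n - 42 <= 12 * n^+3 * (n - 1) * 6.
  move: hh; rewrite (_ : eps * (12 * n ^+ 3 * (n - 1) ^+ 2) = 12 * n ^+ 3 * (n - 1) * ((n - 1) * eps)); last by ring.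
  lra.
rewrite !exprS expr0 !mulr1.
nra.
Qed.

Lemma den_target (R : numFieldType) N c (x y : midx N) :
  (N%:R : R) - 1 != 0 ->
  den R (target c) (rho0 x y) = ceval (N%:R : R) c * (12 * ((N%:R : R) - 1) * Pker R x y).
Proof.
move=> hN. rewrite /target den_normp /den big_map.
transitivity (ceval (N%:R : R) c * den R (Psyn 0%N 3%N) (rho0 x y)).
  rewrite /den mulr_sumr; apply: eq_bigr => m _.
  by rewrite /den_m /= ceval_cmul mulrA.
rewrite den_Psyn //.
Qed.

Lemma melon_c (R : numFieldType) N (lam : R) (s : 'S_3) (x y : midx N) p q r c :
  (N%:R : R) - 1 != 0 ->
  nat_of_ord (s legB) = p -> nat_of_ord (s legC) = q -> nat_of_ord (s legD) = r ->
  K4 p q r = target c ->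
  melonA lam s x y = lam ^+ 2 / N%:R ^+ 3 *
    ((12 * ((N%:R : R) - 1))^-5 * (ceval (N%:R : R) c * (12 * ((N%:R : R) - 1) * Pker R x y))).
Proof.
move=> hN Hp Hq Hr HK.
rewrite (melon_F4 lam s x y hN) F4_K4 Hp Hq Hr HK den_target //.
Qed.

Lemma coefI_eq (R : numFieldType) N (lam P : R) :
  (N%:R : R) != 0 -> (N%:R : R) - 1 != 0 ->
  lam ^+ 2 / N%:R ^+ 3 *
    ((12 * ((N%:R : R) - 1))^-5 * (ceval (N%:R : R) cI * (12 * ((N%:R : R) - 1) * P)))
  = lam ^+ 2 * coefI R N * P.
Proof.
move=> h0 h1.
rewrite /cI ceval_cmul /numI /ceval /= !zRpos !zRneg /= /coefI /=.
field. by rewrite h0 h1.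
Qed.

Lemma coefII_eq (R : numFieldType) N (lam P : R) :
  (N%:R : R) != 0 -> (N%:R : R) - 1 != 0 ->
  lam ^+ 2 / N%:R ^+ 3 *
    ((12 * ((N%:R : R) - 1))^-5 * (ceval (N%:R : R) cII * (12 * ((N%:R : R) - 1) * P)))
  = lam ^+ 2 * coefII R N * P.
Proof.
move=> h0 h1.
rewrite /cII ceval_cmul /numII /ceval /= !zRpos !zRneg /= /coefII /=.
field. by rewrite h0 h1.
Qed.

Lemma fM_eq (R : numFieldType) N :
  (N%:R : R) != 0 -> (N%:R : R) - 1 != 0 ->
  coefI R N *+ 2 + coefII R N *+ 4 = fM R N.
Proof.
move=> h0 h1; rewrite /coefI /coefII /fM /=.
field. by rewrite h0 h1.
Qed.

Lemma ord3E (i : 'I_3) : i = legB \/ i = legC \/ i = legD.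
Proof.
case: i => [[|[|[|k]]] Hk].
- by left; apply: val_inj.
- by right; left; apply: val_inj.
- by right; right; apply: val_inj.
- by [].
Qed.

Lemma trip_cases (s : 'S_3) : s <> 1%g -> s <> tperm legB legD ->
  ((nat_of_ord (s legB), nat_of_ord (s legC)), nat_of_ord (s legD))
    \in [:: ((0, 2), 1); ((1, 0), 2); ((1, 2), 0); ((2, 0), 1)]%N.
Proof.
move=> h1 ht.
have inj := @perm_inj _ s.
have nBC : legB != legC by [].
have nBD : legB != legD by [].
have nCD : legC != legD by [].
case: (ord3E (s legB)) => HB; [|case: HB => HB];
case: (ord3E (s legC)) => HC; try (case: HC => HC);
case: (ord3E (s legD)) => HD; try (case: HD => HD);
rewrite ?HB ?HC ?HD //;
try (by have := inj legB legC; rewrite HB HC => /(_ erefl) /eqP; rewrite (negbTE nBC));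
try (by have := inj legB legD; rewrite HB HD => /(_ erefl) /eqP; rewrite (negbTE nBD));
try (by have := inj legC legD; rewrite HC HD => /(_ erefl) /eqP; rewrite (negbTE nCD)).
- exfalso; apply: h1; apply/permP => i; rewrite perm1.
  by case: (ord3E i) => [->|[->|->]].
- exfalso; apply: ht; apply/permP => i.
  case: (ord3E i) => [->|[->|->]]; rewrite ?tpermL ?tpermR ?tpermD //.
Qed.

Lemma card4 : #|[pred s : 'S_3 | (s != 1%g) && (s != tperm legB legD)]| = 4%N.
Proof.
have ht1 : tperm legB legD != 1%g.
  by apply/eqP => /permP /(_ legB); rewrite tpermL perm1.
have H6 : #|'S_3| = 6%N by rewrite card_Sn.
move: H6; rewrite (cardD1 1%g) (cardD1 (tperm legB legD)) !inE ht1 /=.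
move=> H; have -> : #|[pred s : 'S_3 | (s != 1%g) && (s != tperm legB legD)]| =
  #|[predD1 [predD1 'S_3 & 1%g] & tperm legB legD]|; last by move: H; rewrite !add1n => /eqP; rewrite !eqSS => /eqP.
apply: eq_card => s; rewrite !inE andbT; exact: andbC.
Qed.

Unset Implicit Arguments.
Theorem mainTheorem5 (R : archiRealFieldType) :
  (forall (N : nat), (3 <= N)%N -> forall (lam : R),
    (forall (s : 'S_3) (x y : midx N),
        (s = 1%g \/ s = tperm legB legD) ->
        melonA lam s x y = lam ^+ 2 * coefI R N * Pker R x y)
    /\ (forall (s : 'S_3) (x y : midx N),
        s <> 1%g -> s <> tperm legB legD ->
        melonA lam s x y = lam ^+ 2 * coefII R N * Pker R x y)
    /\ (forall (x y : midx N),
        \sum_(s : 'S_3) melonA lam s x y = lam ^+ 2 * fM R N * Pker R x y))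
  /\ (forall eps : R, 0 < eps ->
        exists M : nat, forall N : nat, (M <= N)%N -> `|fM R N - 12^-1| < eps).
Proof.
split; last exact: fM_lim.
move=> N hN3 lam.
have hN0 : (N%:R : R) != 0 by rewrite pnatr_eq0 -lt0n; apply: leq_trans hN3.
have hN1 : (N%:R : R) - 1 != 0.
  by rewrite subr_eq0 pnatr_eq1; apply/eqP => E; move: hN3; rewrite E.
have HI : forall (s : 'S_3) (x y : midx N), (s = 1%g \/ s = tperm legB legD) ->
    melonA lam s x y = lam ^+ 2 * coefI R N * Pker R x y.
  move=> s x y [->|->].
  - have Hp : nat_of_ord ((1%g : 'S_3) legB) = 0%N by rewrite perm1.
    have Hq : nat_of_ord ((1%g : 'S_3) legC) = 1%N by rewrite perm1.
    have Hr : nat_of_ord ((1%g : 'S_3) legD) = 2%N by rewrite perm1.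
    rewrite (@melon_c R N lam 1%g x y 0 1 2 cI hN1 Hp Hq Hr K4_012).
    exact: coefI_eq.
  - have Hp : nat_of_ord (tperm legB legD legB) = 2%N by rewrite tpermL.
    have Hq : nat_of_ord (tperm legB legD legC) = 1%N by rewrite tpermD.
    have Hr : nat_of_ord (tperm legB legD legD) = 0%N by rewrite tpermR.
    rewrite (@melon_c R N lam _ x y 2 1 0 cI hN1 Hp Hq Hr K4_210).
    exact: coefI_eq.
have HII : forall (s : 'S_3) (x y : midx N), s <> 1%g -> s <> tperm legB legD ->
    melonA lam s x y = lam ^+ 2 * coefII R N * Pker R x y.
  move=> s x y h1 ht; have := trip_cases h1 ht.
  rewrite !inE => /or4P [] /eqP [Hp Hq Hr].
  - rewrite (@melon_c R N lam s x y 0 2 1 cII hN1 Hp Hq Hr K4_021); exact: coefII_eq.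
  - rewrite (@melon_c R N lam s x y 1 0 2 cII hN1 Hp Hq Hr K4_102); exact: coefII_eq.
  - rewrite (@melon_c R N lam s x y 1 2 0 cII hN1 Hp Hq Hr K4_120); exact: coefII_eq.
  - rewrite (@melon_c R N lam s x y 2 0 1 cII hN1 Hp Hq Hr K4_201); exact: coefII_eq.
split; first exact: HI.
split; first exact: HII.
move=> x y.
have ht1 : tperm legB legD != 1%g.
  by apply/eqP => /permP /(_ legB); rewrite tpermL perm1.
rewrite (bigD1 1%g) //= (bigD1 (tperm legB legD)) //=.
rewrite HI; last by left.
rewrite HI; last by right.
rewrite (eq_bigr (fun _ => lam ^+ 2 * coefII R N * Pker R x y)); last first.
  by move=> s /andP[/eqP ht /eqP h1]; apply: HII.
rewrite sumr_const.
rewrite card4.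
rewrite -(fM_eq hN0 hN1).
rewrite -[_ *+ 4]mulr_natr -[coefII R N *+ 4]mulr_natr -[coefI R N *+ 2]mulr_natr.
ring.
Qed.
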